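(* Let $P$ be an instance of $k$-means clustering with $z$ outliers, let $S$ be a finite multiset of points of $P$, let $k'\ge0$ be such that $|S\setminus P_{opt}|\le k'$, and let $H$ be a set of $k+k'$ centers in $\mathbb{R}^D$ with $Cost(S,H)\le c\cdot W$ for some $c\ge1$, where $W$ is the minimum of $Cost(S,H')$ over all sets $H'$ of $k+k'$ points in $\mathbb{R}^D$. Let $S_{opt}=S\cap P_{opt}$. Then $Cost(\tilde S_{opt},H)\le(2+2c)\,Cost(S_{opt},O^* )$.
   Context: $P\subset\mathbb{R}^D$, $|P|=n$, $0<z<n$. $dist(p,H)=\min_{q\in H}\|p-q\|$; $Cost(X,Y)=\sum_{q\in X}dist(q,Y)^2$ (with multiplicity). $P_{opt}\subset P$ with $|P_{opt}|=n-z$ is the set of inliers of an optimal solution of $k$-means with $z$ outliers, $C^*_1,\dots,C^*_k$ the optimal clusters forming $P_{opt}$, $o^*_j$ the mean of $C^*_j$, $O^*=\{o^*_1,\dots,o^*_k\}$. Star shaped transformation: for $p\in C^*_j$, $\tilde p=o^*_j$; for $U\subseteq P_{opt}$ (multiset), $\tilde U$ is the multiset $\{\tilde p:p\in U\}$. *)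

(* Defs.v *)
From HB Require Import structures.
From mathcomp Require Import all_boot all_order all_algebra.
From mathcomp Require Import reals.
Set Implicit Arguments. Unset Strict Implicit. Unset Printing Implicit Defensive.
Import Order.TTheory GRing.Theory Num.Theory.
Local Open Scope ring_scope.

Section Defs.
Variables (R : realType) (D : nat).
Notation V := 'rV[R]_D.

Definition sqdist (p q : V) : R := \sum_(i < D) (p ord0 i - q ord0 i) ^+ 2.

(* dist(p,H)^2 = min_{q in H} ||p - q||^2, for a finite (nonempty) set H
   given as a sequence; (0 by convention if H is empty, never used below) *)
Definition dist2 (p : V) (H : seq V) : R :=
  \big[Num.min/(if H is h :: _ then sqdist p h else 0)]_(q <- H) sqdist p q.

Definition Cost (X Y : seq V) : R := \sum_(q <- X) dist2 q Y.

Definition cluster (k : nat) (Q : seq V) (f : V -> 'I_k) (j : 'I_k) : seq V :=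
  [seq p <- Q | f p == j].

Definition mean (X : seq V) : V := (size X)%:R^-1 *: \sum_(p <- X) p.

Definition centers (k : nat) (c : 'I_k -> V) : seq V := [seq c j | j <- enum 'I_k].

Definition opt_kmeans_outliers (k z : nat) (P Popt : seq V) (c : 'I_k -> V) :=
  [/\ uniq Popt, {subset Popt <= P}, size Popt = (size P - z)%N &
      forall (Q : seq V) (c' : 'I_k -> V),
        uniq Q -> {subset Q <= P} -> size Q = (size P - z)%N ->
        Cost Popt (centers c) <= Cost Q (centers c')].

(* f assigns each inlier to a nearest optimal center (clusters C*_j) *)
Definition voronoi (k : nat) (Popt : seq V) (c : 'I_k -> V) (f : V -> 'I_k) :=
  forall p, p \in Popt -> sqdist p (c (f p)) = dist2 p (centers c).

Definition Ostar (k : nat) (Popt : seq V) (f : V -> 'I_k) : seq V :=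
  [seq mean (cluster Popt f j) | j <- enum 'I_k & cluster Popt f j != [::]].

Definition star (k : nat) (Popt : seq V) (f : V -> 'I_k) (p : V) : V :=
  mean (cluster Popt f (f p)).

End Defs.

(* Main.v *)
Require Import Defs.
From HB Require Import structures.
From mathcomp Require Import all_boot all_order all_algebra.
From mathcomp Require Import reals.
From mathcomp Require Import ring lra zify.
Import Order.TTheory GRing.Theory Num.Theory.
Local Open Scope ring_scope.

Section Aux.
Variables (R : realType) (D : nat).
Notation V := 'rV[R]_D.

Lemma bigmin_le (F : V -> R) x0 (s : seq V) q :
  q \in s -> \big[Num.min/x0]_(x <- s) F x <= F q.
Proof.
elim: s => [//|a s IH]; rewrite inE big_cons => /orP [/eqP->|/IH H].
  by rewrite ge_min lexx.
by rewrite ge_min H orbT.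
Qed.

Lemma bigmin_ex (F : V -> R) x0 (s : seq V) :
  \big[Num.min/x0]_(x <- s) F x = x0 \/
  exists2 q, q \in s & \big[Num.min/x0]_(x <- s) F x = F q.
Proof.
elim: s => [|a s IH]; first by left; rewrite big_nil.
rewrite big_cons; case: (leP (F a) (\big[Num.min/x0]_(x <- s) F x)) => Hl.
  by right; exists a => //; rewrite inE eqxx.
case: IH => [->|[q qs ->]]; first by left.
by right; exists q => //; rewrite inE qs orbT.
Qed.

Lemma dist2_le (p : V) (H : seq V) q : q \in H -> dist2 p H <= sqdist p q.
Proof. exact: bigmin_le. Qed.

Lemma dist2_ex (p : V) (H : seq V) : H != [::] -> exists2 q, q \in H & dist2 p H = sqdist p q.
Proof.
case: H => [//|h H] _; rewrite /dist2.
case: (bigmin_ex (sqdist p) (sqdist p h) (h :: H)) => [->|//].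
by exists h; rewrite ?inE ?eqxx.
Qed.

Lemma sqdist_ge0 (p q : V) : 0 <= sqdist p q.
Proof. by apply: sumr_ge0 => i _; apply: sqr_ge0. Qed.

Lemma dist2_ge0 (p : V) (H : seq V) : 0 <= dist2 p H.
Proof.
case: H => [|h H]; first by rewrite /dist2 big_nil.
by have [q _ ->] := dist2_ex p (h :: H) isT; apply: sqdist_ge0.
Qed.

Lemma sqdist_sym (p q : V) : sqdist p q = sqdist q p.
Proof. by apply: eq_bigr => i _; rewrite -sqrrN opprB. Qed.

Lemma sqdist_xx (p : V) : sqdist p p = 0.
Proof. by apply: big1 => i _; rewrite subrr expr0n. Qed.

Lemma sqdist_tri (a b p : V) : sqdist a b <= 2 * sqdist a p + 2 * sqdist p b.
Proof.
rewrite /sqdist !mulr_sumr -big_split /=; apply: ler_sum => i _.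
set x := a ord0 i; set y := b ord0 i; set w := p ord0 i.
have : 0 <= ((x - w) - (w - y)) ^+ 2 by apply: sqr_ge0.
rewrite -subr_ge0; nra.
Qed.

Lemma sqdist_eq0 (p q : V) : sqdist p q = 0 -> p = q.
Proof.
move=> /eqP; rewrite psumr_eq0 => [/allP H|i _]; last exact: sqr_ge0.
apply/rowP => i; have := H i (mem_index_enum _).
by rewrite sqrf_eq0 subr_eq0 => /eqP.
Qed.

Lemma Cost_ge0 (X H : seq V) : 0 <= Cost X H.
Proof. by apply: sumr_ge0 => i _; apply: dist2_ge0. Qed.

Lemma mean_decomp (X : seq V) y : X != [::] ->
  \sum_(x <- X) sqdist x y =
  \sum_(x <- X) sqdist x (mean X) + (size X)%:R * sqdist (mean X) y.
Proof.
move=> XN; rewrite /sqdist [LHS]exchange_big [X in X + _]exchange_big /=.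
rewrite mulr_sumr -big_split /=; apply: eq_bigr => i _.
have nz : (size X)%:R != 0 :> R by rewrite pnatr_eq0 size_eq0.
have mE : mean X ord0 i = (size X)%:R^-1 * \sum_(x <- X) x ord0 i.
  by rewrite /mean mxE summxE.
rewrite -/(mean X) in mE *; move: (mean X ord0 i) mE => m mE.
move: (y ord0 i) => yi.
have S0 : \sum_(x <- X) (x ord0 i - m) = 0.
  rewrite sumrB big_const_seq count_predT -Monoid.iteropE /= -/(_ *+ _).
  by rewrite mE; field.
rewrite (@eq_bigr _ _ _ _ _ _ _ (fun x : V => (x ord0 i - m) ^+ 2 + (2 * (m - yi)) * (x ord0 i - m) + (m - yi) ^+ 2)); last by move=> x _; ring.
rewrite !big_split /= -mulr_sumr S0 mulr0 addr0 big_const_seq count_predT.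
by rewrite iter_addr_0 mulr_natl.
Qed.


Lemma opt_center k z (P Popt : seq V) (c0 : 'I_k -> V) (f : V -> 'I_k) :
  opt_kmeans_outliers z P Popt c0 -> voronoi Popt c0 f ->
  forall p, p \in Popt -> c0 (f p) = mean (cluster Popt f (f p)).
Proof.
move=> [uP sP szP opt] vor p pP.
set j := f p; set X := cluster Popt f j; set m := mean X.
apply/eqP; apply: contraT => neq.
pose c' := fun i => if i == j then m else c0 i.
suff: Cost Popt (centers c') < Cost Popt (centers c0) by rewrite ltNge (opt Popt c' uP sP szP).
have E0 : Cost Popt (centers c0) = \sum_(q <- Popt) sqdist q (c0 (f q)).
  by rewrite /Cost big_seq_cond [RHS]big_seq_cond; apply: eq_bigr => q /andP[qP _]; rewrite vor.
apply: (le_lt_trans (y := \sum_(q <- Popt) sqdist q (c' (f q)))).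
  by apply: ler_sum => q _; apply: dist2_le; apply: map_f; rewrite mem_enum.
rewrite E0 (bigID (fun q => f q == j)) [X in _ < X](bigID (fun q => f q == j)) /=.
have -> : \sum_(i <- Popt | f i != j) sqdist i (c' (f i)) =
          \sum_(i <- Popt | f i != j) sqdist i (c0 (f i)).
  by apply: eq_bigr => q /negbTE H; rewrite /c' H.
rewrite ltrD2r -[X in X < _]big_filter -[X in _ < X]big_filter -/X.
change (\sum_(i <- X) sqdist i (c' (f i)) < \sum_(i <- X) sqdist i (c0 (f i))).
have -> : \sum_(i <- X) sqdist i (c' (f i)) = \sum_(i <- X) sqdist i m.
  rewrite big_seq_cond [RHS]big_seq_cond; apply: eq_bigr => q /andP[].
  by rewrite mem_filter => /andP[/eqP -> _] _; rewrite /c' eqxx.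
have -> : \sum_(i <- X) sqdist i (c0 (f i)) = \sum_(i <- X) sqdist i (c0 j).
  rewrite big_seq_cond [RHS]big_seq_cond; apply: eq_bigr => q /andP[].
  by rewrite mem_filter => /andP[/eqP -> _] _.
have pX : p \in X by rewrite mem_filter eqxx pP.
have XN : X != [::] by apply/eqP => XE; rewrite XE in pX.
rewrite (@mean_decomp X (c0 j) XN) -/m ltrDl; apply: mulr_gt0.
  by rewrite ltr0n lt0n size_eq0.
rewrite lt_def sqdist_ge0 andbT; apply/eqP => /sqdist_eq0 E.
by rewrite E eqxx in neq.
Qed.
End Aux.
Arguments opt_center {R D k z P Popt c0 f}.
Arguments dist2_ex {R D}.
Arguments dist2_le {R D p H q}.
Arguments sqdist_tri {R D}.
Arguments sqdist_sym {R D}.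
Arguments sqdist_xx {R D}.
Arguments dist2_ge0 {R D}.
Arguments Cost_ge0 {R D}.

Theorem lemma6 (R : realType) (D k z k' : nat) (P : seq 'rV[R]_D)
    (Popt : seq 'rV[R]_D) (c0 : 'I_k -> 'rV[R]_D) (f : 'rV[R]_D -> 'I_k)
    (S H : seq 'rV[R]_D) (c : R) :
  (0 < k)%N -> uniq P -> (0 < z)%N -> (z < size P)%N ->
  opt_kmeans_outliers z P Popt c0 ->
  voronoi Popt c0 f ->
  {subset S <= P} ->
  (size [seq p <- S | p \notin Popt] <= k')%N ->
  uniq H -> size H = (k + k')%N ->
  1 <= c ->
  (forall H' : seq 'rV[R]_D, uniq H' -> size H' = (k + k')%N ->
       Cost S H <= c * Cost S H') ->
  let Sopt := [seq p <- S | p \in Popt] in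
  Cost (map (star Popt f) Sopt) H <= (2 + 2 * c) * Cost Sopt (Ostar Popt f).
Proof.
move=> k0 uP z0 zP opt vor sSP snot uH szH c1 Hopt; cbv zeta.
set Sopt := [seq p <- S | p \in Popt].
have cE := opt_center opt vor.
set O := Ostar Popt f.
have starO : forall p, p \in Popt -> star Popt f p \in O.
  move=> p pP; apply: (map_f (fun j => mean (cluster Popt f j))).
  rewrite mem_filter mem_enum andbT; apply/eqP => E.
  have : p \in cluster Popt f (f p) by rewrite mem_filter eqxx pP.
  by rewrite E.
have Osub : forall q, q \in O -> q \in centers c0.
  move=> q /mapP [j]; rewrite mem_filter => /andP [jN _] ->.
  case E: (cluster Popt f j) jN => [//|p s] _.
  have : p \in cluster Popt f j by rewrite E inE eqxx.
  rewrite mem_filter => /andP [/eqP fp pP].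
  by rewrite -E -fp -cE //; apply: map_f; rewrite mem_enum.
have ON : forall p, p \in Popt -> O != [::].
  by move=> p pP; apply/eqP => E; have := starO p pP; rewrite E.
have key : forall p, p \in Popt -> sqdist p (star Popt f p) <= dist2 p O.
  move=> p pP; have [q qO ->] := dist2_ex p _ (ON p pP).
  rewrite /star -cE // vor //; exact: dist2_le (Osub q qO).
have HN : H != [::].
  by apply/eqP => E; rewrite E /= in szH; lia.
have step1 : Cost (map (star Popt f) Sopt) H <= 2 * Cost Sopt O + 2 * Cost Sopt H.
  rewrite /Cost big_map !mulr_sumr -big_split /=.
  rewrite big_seq_cond [X in _ <= X]big_seq_cond; apply: ler_sum => p /andP[pS _].
  have pP : p \in Popt by move: pS; rewrite mem_filter => /andP[].
  have [h hH ->] := dist2_ex p _ HN.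
    apply: le_trans (dist2_le hH) _; apply: le_trans (sqdist_tri _ _ p) _.
  rewrite sqdist_sym; apply: lerD => //; apply: ler_wpM2l => //; exact: key.
have step2 : Cost Sopt H <= Cost S H.
  rewrite /Cost /Sopt big_filter [X in _ <= X](bigID (fun p => p \in Popt)) /=.
  by rewrite lerDl; apply: sumr_ge0 => *; apply: dist2_ge0.
set A := O ++ [seq p <- S | p \notin Popt].
set U := undup A.
set F := [seq h <- H | h \notin U].
set H' := U ++ take (k + k' - size U) F.
have szO : (size O <= k)%N.
  by rewrite /O /Ostar size_map size_filter (leq_trans (count_size _ _)) // size_enum_ord.
have szU : (size U <= k + k')%N.
  by rewrite (leq_trans (size_undup A)) // size_cat leq_add.
have szF : (k + k' - size U <= size F)%N.
  have : (count (mem U) H <= size U)%N.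
    rewrite -size_filter uniq_leq_size ?filter_uniq // => x.
    by rewrite mem_filter => /andP[].
  have := count_predC (mem U) H.
  have -> : count (predC (mem U)) H = size F by rewrite size_filter; apply: eq_count.
  move=> e1 e2; rewrite -e1 in szH; rewrite -szH leq_subLR; exact: leq_add e2 (leqnn _).
have uH' : uniq H'.
  rewrite cat_uniq undup_uniq take_uniq ?filter_uniq // andbT /=.
  by apply/hasPn => x /mem_take; rewrite mem_filter => /andP[].
have sH' : size H' = (k + k')%N.
  by rewrite size_cat size_takel // subnKC.
have AH : forall x, x \in A -> x \in H'.
  by move=> x xA; rewrite mem_cat mem_undup xA.
have Cle : Cost S H' <= Cost Sopt O.
  rewrite /Cost /Sopt big_filter [X in X <= _](bigID (fun p => p \in Popt)) /=.
  rewrite -[X in _ <= X]addr0; apply: lerD.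
    rewrite big_seq_cond [X in _ <= X]big_seq_cond; apply: ler_sum => p /andP [pS pP].
    have [q qO ->] := dist2_ex p _ (ON p pP).
    by apply: dist2_le; apply: AH; rewrite mem_cat qO.
  rewrite big_seq_cond.
  apply: le_trans (_ : _ <= \sum_(p <- S | (p \in S) && (p \notin Popt)) 0) _.
    apply: ler_sum => p /andP[pS pN].
    have pH' : p \in H' by apply: AH; rewrite mem_cat mem_filter pN pS orbT.
    by apply: le_trans (dist2_le pH') _; rewrite sqdist_xx.
  by rewrite big1.
have := Hopt H' uH' sH'.
have c0' : 0 <= c by lra.
have := ler_wpM2l c0' Cle.
have := Cost_ge0 Sopt O.
lra.
Qed.
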